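(* Consider a distributed storage system $\mathcal{D}(n,k,d)$ with $d=n-1$ operating in the bandwidth-limited regime with repair-bandwidth budget $\Gamma$, in the presence of an omniscient adversary controlling $b$ nodes. If $2b<k$, the resiliency capacity is \[ C_r^{BL}(\Gamma)=\sum_{i=2b+1}^{k}(n-i)\beta,\qquad \beta=\frac{\Gamma}{n-1}, \] achieved with node storage capacity $\alpha=\Gamma$. If $2b\ge k$, then $C_r^{BL}(\Gamma)=0$.
   Context: A distributed storage system (DSS) $\mathcal{D}(n,k,d)$, $k\le d\le n-1$: a source stores a file on $n$ storage nodes, each storing at most $\alpha$ symbols of a finite field $\mathbb{F}_q$. Nodes fail one at a time; each failed node is replaced by a new node that connects to some $d$ of the remaining $n-1$ active nodes and downloads $\beta=\gamma/d$ symbols from each (symmetric repair; $\gamma$ is the repair bandwidth), then stores at most $\alpha$ symbols. A data collector connects to any $k$ simultaneously active nodes, downloads their stored contents, and must recover the file. An omniscient adversary knows the file, the storage/repair/decoding schemes and all stored data, and may control any $b$ nodes among all nodes ever in the system (possibly at different times): for a controlled node it may arbitrarily alter the stored data and the messages that node sends during repair and to data collectors. The resiliency capacity $C_r(\alpha,\gamma)$ is the maximum file size that can be stored so that every data collector, for any failure/repair sequence, recovers the file correctly whatever the adversary does. The bandwidth-limited resiliency capacity is $C_r^{BL}(\Gamma)=\sup_{\gamma\le\Gamma,\ \alpha\ge0}C_r(\alpha,\gamma)$. Symbol counts are taken so that $\beta=\Gamma/(n-1)$ is a positive integer and $q$ is large enough for the required MDS codes to exist. *)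

(* Defs.v *)
(* Model of a DSS D(n,k,d) with d = n-1 (the only case the
   theorem concerns), symmetric repair, functional repair allowed, arbitrary
   (possibly non-linear) deterministic schemes over a finite field F = F_q,
   and an omniscient adversary controlling at most b nodes ever in the system. *)
From HB Require Import structures.
From mathcomp Require Import all_boot all_order all_algebra.
Set Implicit Arguments. Unset Strict Implicit. Unset Printing Implicit Defensive.
Import GRing.Theory.
Local Open Scope ring_scope.

Definition ztup (F : finFieldType) (m : nat) : m.-tuple F := [tuple (0 : F) | _ < m].

(* A storage / repair / decoding scheme with node capacity al symbols,
   per-helper repair download be symbols, file size B symbols.
   Histories are failure sequences (list of failed slots).
   - enc i file       : initial content of node in slot i
   - msg h j c        : message sent by the helper in slot j with content c,
                        during the repair whose history (including the
                        currently failed slot as last element) is h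
   - rep h m          : content stored by the new node, from the messages m j
                        received from every other slot j (entry of the failed
                        slot is the zero placeholder)
   - dec h S x        : data collector's decoder, at history h, connecting to
                        slot set S, with x j the data downloaded from slot j
                        (zero placeholder for j outside S). *)
Record scheme (F : finFieldType) (n al be B : nat) := Scheme {
  enc : 'I_n -> B.-tuple F -> al.-tuple F;
  msg : seq 'I_n -> 'I_n -> al.-tuple F -> be.-tuple F;
  rep : seq 'I_n -> ('I_n -> be.-tuple F) -> al.-tuple F;
  dec : seq 'I_n -> {set 'I_n} -> ('I_n -> al.-tuple F) -> B.-tuple F }.

(* Nodes ever in the system are identified by (slot, creation time):
   initial nodes have creation time 0, the node created by the t-th repair
   (t >= 1) has creation time t.  A : list of adversary-controlled nodes.
   advmsg t j : message sent in the t-th repair by the (controlled) helper in slot j. *)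
Fixpoint run (F : finFieldType) (n al be B : nat) (sch : scheme F n al be B)
    (A : seq (nat * nat)) (advmsg : nat -> 'I_n -> be.-tuple F)
    (h : seq 'I_n) (st : 'I_n -> al.-tuple F) (gn : 'I_n -> nat) (t : nat)
    (rest : seq 'I_n) : ('I_n -> al.-tuple F) * ('I_n -> nat) :=
  match rest with
  | [::] => (st, gn)
  | i :: rest' =>
      let h' := rcons h i in
      let t' := t.+1 in
      let m := fun j : 'I_n =>
        if j == i then ztup F be
        else if (nat_of_ord j, gn j) \in A then advmsg t' j
        else msg sch h' j (st j) in
      let st' := fun j : 'I_n => if j == i then rep sch h' m else st j in
      let gn' := fun j : 'I_n => if j == i then t' else gn j in
      run sch A advmsg h' st' gn' t' rest'
  end.

Definition download (F : finFieldType) (n al be B : nat) (sch : scheme F n al be B)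
    (file : B.-tuple F) (fs : seq 'I_n) (A : seq (nat * nat))
    (advmsg : nat -> 'I_n -> be.-tuple F) (advdc : 'I_n -> al.-tuple F)
    (S : {set 'I_n}) : 'I_n -> al.-tuple F :=
  let r := run sch A advmsg [::] (fun j => enc sch j file) (fun _ => 0%N) 0%N fs in
  fun j => if j \in S then
             (if (nat_of_ord j, r.2 j) \in A then advdc j else r.1 j)
           else ztup F al.

(* A file of B symbols can be stored resiliently with node storage al and
   per-helper repair bandwidth be (so repair bandwidth gamma = (n-1)*be):
   some scheme lets every data collector (any failure sequence, any k slots)
   decode correctly whatever an adversary controlling <= b nodes does. *)
Definition resilient (F : finFieldType) (n k b al be B : nat) : Prop :=
  exists sch : scheme F n al be B,
    forall (file : B.-tuple F) (fs : seq 'I_n) (A : seq (nat * nat))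
           (advmsg : nat -> 'I_n -> be.-tuple F) (advdc : 'I_n -> al.-tuple F)
           (S : {set 'I_n}),
      (size A <= b)%N -> #|S| = k ->
      dec sch fs S (download sch file fs A advmsg advdc S) = file.

(* Main.v *)
Require Import Defs.
From HB Require Import structures.
From mathcomp Require Import all_boot all_order all_algebra.
From Stdlib Require Import FunctionalExtensionality.
Set Implicit Arguments. Unset Strict Implicit. Unset Printing Implicit Defensive.
Import GRing.Theory.


Definition fsq (n' k : nat) : seq 'I_n'.+1 := mkseq (fun i => inord i) k.

Lemma size_fsq n' k : size (fsq n' k) = k.
Proof. by rewrite size_mkseq. Qed.

Lemma drop_fsq n' k t : t < k ->
  drop t (fsq n' k) = inord t :: drop t.+1 (fsq n' k).
Proof.
move=> tk; rewrite (drop_nth (inord t)) ?size_fsq //.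
by rewrite nth_mkseq.
Qed.

Lemma take_fsq n' k t : t < k ->
  rcons (take t (fsq n' k)) (inord t) = take t.+1 (fsq n' k).
Proof.
move=> tk; rewrite (take_nth (inord t)) ?size_fsq //.
by rewrite nth_mkseq.
Qed.

Definition mC (F : finFieldType) n' al be B (sch : scheme F n'.+1 al be B) k
  (file : nat -> B.-tuple F) (i : nat) (prev : seq (al.-tuple F)) (j : 'I_n'.+1)
  : be.-tuple F :=
  if j == inord i then ztup F be
  else if (j < i)%N then msg sch (take i.+1 (fsq n' k)) j (nth (ztup F al) prev j)
  else msg sch (take i.+1 (fsq n' k)) j (enc sch j (file i)).

Fixpoint Cs (F : finFieldType) n' al be B (sch : scheme F n'.+1 al be B) k
  (file : nat -> B.-tuple F) (i : nat) : seq (al.-tuple F) :=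
  match i with
  | 0 => [::]
  | i'.+1 => rcons (Cs sch k file i')
               (rep sch (take i'.+1 (fsq n' k)) (mC sch k file i' (Cs sch k file i')))
  end.

Lemma size_Cs (F : finFieldType) n' al be B (sch : scheme F n'.+1 al be B) k file i :
  size (Cs sch k file i) = i.
Proof. by elim: i => //= i IH; rewrite size_rcons IH. Qed.

Lemma nth_Cs (F : finFieldType) n' al be B (sch : scheme F n'.+1 al be B) k file i j :
  j < i -> nth (ztup F al) (Cs sch k file i) j =
    rep sch (take j.+1 (fsq n' k)) (mC sch k file j (Cs sch k file j)).
Proof.
elim: i => // i IH; rewrite ltnS leq_eqVlt => /orP[/eqP->|ji] /=.
  by rewrite nth_rcons size_Cs ltnn eqxx.
by rewrite nth_rcons size_Cs ji IH.
Qed.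

Definition Cfin (F : finFieldType) n' al be B (sch : scheme F n'.+1 al be B) k file
  (j : nat) := nth (ztup F al) (Cs sch k file k) j.

Definition advC (F : finFieldType) n' al be B (sch : scheme F n'.+1 al be B) k file
  (t : nat) (j : 'I_n'.+1) : be.-tuple F :=
  msg sch (take t (fsq n' k)) j (Cfin sch k file j).

Definition Inv (F : finFieldType) n' al B (P : pred nat) (g : B.-tuple F)
  (encf : 'I_n'.+1 -> B.-tuple F -> al.-tuple F) (C : nat -> al.-tuple F) (t : nat)
  (st : 'I_n'.+1 -> al.-tuple F) (gn : 'I_n'.+1 -> nat) :=
  forall x : 'I_n'.+1, ((x < t)%N -> gn x = x.+1 /\ (~~ P x -> st x = C x)) /\
                       ((t <= x)%N -> gn x = 0 /\ st x = encf x g).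

Lemma run_inv (F : finFieldType) n' al be B (sch : scheme F n'.+1 al be B) k file
  (P : pred nat) (A : seq (nat * nat)) (g : B.-tuple F) :
  k <= n' ->
  (forall x, (x, 0) \notin A) ->
  (forall x, x < k -> ((x, x.+1) \in A) = P x) ->
  (forall t (j : 'I_n'.+1), t < k -> ~~ P t -> t < j ->
     msg sch (take t.+1 (fsq n' k)) j (enc sch j g) =
     msg sch (take t.+1 (fsq n' k)) j (enc sch j (file t))) ->
  forall d t st gn, t + d = k ->
  Inv P g (enc sch) (Cfin sch k file) t st gn ->
  let r := run sch A (advC sch k file) (take t (fsq n' k)) st gn t (drop t (fsq n' k)) in
  Inv P g (enc sch) (Cfin sch k file) k r.1 r.2.
Proof.
move=> kn HA0 HA1 Hg; elim=> [|d IH] t st gn.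
  rewrite addn0 => -> Hi /=.
  by rewrite drop_oversize ?size_fsq.
move=> htd Hi.
have tk : t < k by rewrite -htd addnS ltnS leq_addr.
rewrite drop_fsq //= take_fsq //.
have tn : t < n'.+1 by apply: leq_trans tk _; apply: leq_trans kn _.
have vt : (@inord n' t : nat) = t by rewrite inordK.
apply: IH; first by rewrite addSnnS.
move=> x; split.
- rewrite ltnS => xt.
  case: (eqVneq x (inord t)) => [->|xne].
    split; first by rewrite vt.
    move=> nP; rewrite vt in nP; rewrite /Cfin nth_Cs; last by rewrite vt.
    rewrite vt; congr (rep sch _ _).
    apply: functional_extensionality => j.
    rewrite /mC; case: (eqVneq j (inord t)) => // jne.
    have jt : (j : nat) != t by apply: contra jne => /eqP jt; apply/eqP/val_inj; rewrite /= vt.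
    case: (ltnP j t) => jlt.
      have [gj sj] := (Hi j).1 jlt.
      rewrite gj HA1; last by apply: ltn_trans tk.
      case Pj: (P j).
        by by rewrite /advC /Cfin (nth_Cs _ _ _ (ltn_trans jlt tk)) (nth_Cs _ _ _ jlt).
      by rewrite sj ?Pj // /Cfin (nth_Cs _ _ _ (ltn_trans jlt tk)) (nth_Cs _ _ _ jlt).
    have [gj sj] := (Hi j).2 jlt.
    rewrite gj (negbTE (HA0 _)) sj (Hg _ _ tk nP) //.
    by rewrite ltn_neqAle eq_sym jt jlt.
  have xt' : x < t.
    by rewrite ltn_neqAle xt andbT; apply: contra xne => /eqP xt2; apply/eqP/val_inj; rewrite /= vt.
  exact: (Hi x).1 xt'.
- move=> tx.
  have xne : x != inord t.
    by apply/eqP => xe; move: tx; rewrite xe vt ltnn.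
  rewrite /= (negbTE xne); apply: (Hi x).2; exact: ltnW.
Qed.
Lemma card_lt (N k : nat) : k <= N -> #|[set x : 'I_N | x < k]| = k.
Proof.
move=> kN.
have -> : [set x : 'I_N | x < k] = [set widen_ord kN y | y in 'I_k].
  apply/setP => x; rewrite inE; apply/idP/imsetP.
    by move=> xk; exists (Ordinal xk) => //; apply: val_inj.
  by case=> y _ ->; rewrite /= ltn_ord.
rewrite card_imset ?card_ord //.
by move=> y1 y2 /(congr1 val) /= e; apply: val_inj.
Qed.

Definition Amk a m : seq (nat * nat) := [seq (i, i.+1) | i <- iota a m].

Lemma mem_Amk a m x y : ((x, y) \in Amk a m) = (y == x.+1) && (a <= x < a + m).
Proof.
apply/mapP/andP.
  by case=> i; rewrite mem_iota => hi [-> ->].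
by case=> /eqP -> hx; exists x; rewrite ?mem_iota.
Qed.

Lemma conv_inj (F : finFieldType) n' al be B b k c1 c2 (sch : scheme F n'.+1 al be B) :
  k <= n' -> c1 <= b -> c2 <= b -> c1 + c2 <= k ->
  (forall (file : B.-tuple F) (fs : seq 'I_n'.+1) (A : seq (nat * nat))
           (advmsg : nat -> 'I_n'.+1 -> be.-tuple F) (advdc : 'I_n'.+1 -> al.-tuple F)
           (S : {set 'I_n'.+1}),
      (size A <= b)%N -> #|S| = k ->
      dec sch fs S (download sch file fs A advmsg advdc S) = file) ->
  forall f f' : B.-tuple F,
  (forall t (j : 'I_n'.+1), c1 + c2 <= t < k -> t < j ->
     msg sch (take t.+1 (fsq n' k)) j (enc sch j f) =
     msg sch (take t.+1 (fsq n' k)) j (enc sch j f')) -> f = f'.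
Proof.
move=> kn c1b c2b ck Hres f f' Hphi.
pose file := fun i => if i < c1 then f' else f.
pose S := [set x : 'I_n'.+1 | x < k].
have cS : #|S| = k by rewrite card_lt // ltnW.
pose adv := advC sch k file.
pose advd := fun x : 'I_n'.+1 => Cfin sch k file x.
pose D := fun x : 'I_n'.+1 => if x \in S then Cfin sch k file x else ztup F al.
have key : forall a m (g : B.-tuple F), a + m <= k ->
  (forall t (j : 'I_n'.+1), t < k -> ~~ (a <= t < a + m) -> t < j ->
     msg sch (take t.+1 (fsq n' k)) j (enc sch j g) =
     msg sch (take t.+1 (fsq n' k)) j (enc sch j (file t))) ->
  download sch g (fsq n' k) (Amk a m) adv advd S = D.
  move=> a m g amk Hg.
  have HA0 : forall x, (x, 0) \notin Amk a m by move=> x; rewrite mem_Amk.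
  have HA1 : forall x, x < k -> ((x, x.+1) \in Amk a m) = (a <= x < a + m).
    by move=> x _; rewrite mem_Amk eqxx.
  have Hi0 : Inv [pred x | a <= x < a + m] g (enc sch) (Cfin sch k file) 0
               (fun j => enc sch j g) (fun _ => 0).
    by move=> x; split.
  have := @run_inv F n' al be B sch k file [pred x | a <= x < a + m] (Amk a m) g kn HA0 HA1 Hg
            k 0 _ _ (add0n k) Hi0.
  rewrite take0 drop0 /= => Hr.
  apply: functional_extensionality => x.
  rewrite /download /D; case: ifP => // xS.
  have xk : x < k by move: xS; rewrite inE.
  have [gx sx] := (Hr x).1 xk.
  rewrite gx HA1 //; case: ifP => Px //.
  by apply: sx; rewrite /= Px.
have e1 := Hres f (fsq n' k) (Amk 0 c1) adv advd S.
rewrite size_map size_iota cS in e1; have {e1}e1 := e1 c1b erefl.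
have e2 := Hres f' (fsq n' k) (Amk c1 c2) adv advd S.
rewrite size_map size_iota cS in e2; have {e2}e2 := e2 c2b erefl.
rewrite key in e1; last first.
- move=> t j tk; rewrite /= add0n -leqNgt /file => c1t _.
  by rewrite ltnNge c1t.
- exact: leq_trans (leq_addr _ _) ck.
rewrite key in e2 => //.
  by rewrite -e1 -e2.
move=> t j tk; rewrite negb_and -leqNgt -ltnNge /file => /orP[tc|ct] tj.
  by rewrite tc.
rewrite ltnNge (leq_trans (leq_addr _ _) ct) /=.
by rewrite Hphi // ct tk.
Qed.


Definition Dset n' k c := [set p : 'I_k * 'I_n'.+1 | (c <= p.1) && (p.1 < p.2)].

Lemma conv_bound (F : finFieldType) n' al be B b k c1 c2 (sch : scheme F n'.+1 al be B) :
  k <= n' -> c1 <= b -> c2 <= b -> c1 + c2 <= k ->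
  (forall (file : B.-tuple F) (fs : seq 'I_n'.+1) (A : seq (nat * nat))
           (advmsg : nat -> 'I_n'.+1 -> be.-tuple F) (advdc : 'I_n'.+1 -> al.-tuple F)
           (S : {set 'I_n'.+1}),
      (size A <= b)%N -> #|S| = k ->
      dec sch fs S (download sch file fs A advmsg advdc S) = file) ->
  B <= be * #|Dset n' k (c1 + c2)|.
Proof.
move=> kn c1b c2b ck Hres.
pose D := Dset n' k (c1 + c2).
pose Phi := fun f : B.-tuple F => [ffun p : {p | p \in D} =>
   msg sch (take (val p).1.+1 (fsq n' k)) (val p).2 (enc sch (val p).2 f)].
have Pinj : injective Phi.
  move=> f f' e; apply: (conv_inj kn c1b c2b ck Hres) => t j /andP[ct tk] tj.
  have pD : ((Ordinal tk, j) \in D) by rewrite inE /= ct tj.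
  move/ffunP: e => /(_ (Sub (Ordinal tk, j) pD)).
  by rewrite !ffunE.
have := leq_card Phi Pinj.
rewrite card_ffun !card_tuple card_sig -expnM leq_exp2l ?card_finNzRing_gt1 //.
Qed.

Lemma sum_lt N i : \sum_(j < N) (i < j : nat) = N - i.+1.
Proof.
elim: N => [|N IH]; first by rewrite big_ord0.
rewrite big_ord_recr /= IH subSS.
case: (ltnP i N) => iN.
  by rewrite addn1 -subSn.
by rewrite addn0; move: (iN); rewrite -subn_eq0 => /eqP ->; apply/eqP; rewrite subn_eq0 ltnW.
Qed.

Lemma card_Dset n' k c : c <= k ->
  #|Dset n' k c| = \sum_(c.+1 <= i < k.+1) (n'.+1 - i).
Proof.
move=> ck.
have -> : #|Dset n' k c| = \sum_(p : 'I_k * 'I_n'.+1) ((c <= p.1) && (p.1 < p.2) : nat).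
  rewrite -sum1_card big_mkcond /=; apply: eq_bigr => p _; rewrite inE.
  by case: ifP.
rewrite -(pair_bigA _ (fun (i:'I_k) (j:'I_n'.+1) => ((c <= i) && (i < j) : nat))) /=.
have -> : \sum_(i < k) \sum_(j < n'.+1) ((c <= i) && (i < j) : nat) =
          \sum_(i < k) ((c <= i) * (n'.+1 - i.+1)).
  apply: eq_bigr => i _; case: (c <= i) => /=; last by rewrite mul0n big1.
  by rewrite mul1n sum_lt.
rewrite big_add1 /= -(big_mkord xpredT (fun i => (c <= i) * (n'.+1 - i.+1))).
rewrite (big_cat_nat (leq0n c) ck) /= big1_seq ?add0n.
  by apply: eq_big_nat => i /andP[ci _]; rewrite ci mul1n.
by move=> i /andP[_]; rewrite mem_index_iota => /andP[_ ic]; rewrite leqNgt ic.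
Qed.


Definition Eset (T : finType) (U G : {set T}) : {set {set T}} :=
  [set [set u; v] | u in U, v in G :\ u].

Lemma card_Eset (T : finType) s : forall (U G : {set T}), #|U| = s -> U \subset G ->
  \sum_(a < s) (#|G| - a.+1) <= #|Eset U G|.
Proof.
elim: s => [|s IH] U G cU sUG; first by rewrite big_ord0.
have [u uU] : exists u, u \in U.
  by apply/set0Pn; rewrite -card_gt0 cU.
have uG : u \in G by apply: (subsetP sUG).
pose U' := U :\ u; pose G' := G :\ u.
have cU' : #|U'| = s by rewrite /U' (cardsD1 u U) uU in cU; case: cU.
have cG' : #|G'| = #|G|.-1 by rewrite /G' (cardsD1 u G) uG.
have sUG' : U' \subset G' by apply: setSD.
have IH' := IH U' G' cU' sUG'.
pose X := [set [set u; v] | v in G'].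
have cX : #|X| = #|G'|.
  apply: card_in_imset => v1 v2; rewrite !inE => /andP[n1 _] /andP[n2 _] e.
  have : v1 \in [set u; v2] by rewrite -e !inE eqxx orbT.
  by rewrite !inE (negbTE n1) => /eqP.
have dis : Eset U' G' :&: X = set0.
  apply/setP => A; rewrite !inE; apply/negP => /andP[/imset2P[u' v' hu' hv' ->] /imsetP[v hv e]].
  have : u \in [set u'; v'] by rewrite e !inE eqxx.
  move: hu' hv'; rewrite !inE => /andP[nu' _] /andP[nv' /andP[nv'' _]].
  by case/orP => /eqP E; [move: nu'; rewrite E eqxx | move: nv''; rewrite E eqxx].
have sub : Eset U' G' :|: X \subset Eset U G.
  apply/subsetP => A; rewrite inE => /orP[/imset2P[u' v' hu' hv' ->]|/imsetP[v hv ->]].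
    apply/imset2P; exists u' v' => //.
      by move: hu'; rewrite !inE => /andP[].
    by move: hv'; rewrite !inE => /andP[-> /andP[_ ->]].
  by apply/imset2P; exists u v.
have := subset_leq_card sub; rewrite cardsU dis cards0 subn0 cX cG'.
apply: leq_trans.
rewrite big_ord_recl /= subn1 addnC leq_add2r.
apply: leq_trans IH'; rewrite cG'.
apply: leq_sum => a _; rewrite /bump /= add1n.
by rewrite -subn1 -subnDA add1n.
Qed.

Lemma sum_mono N k bb s g : bb <= k -> k - bb <= s -> N - bb <= g ->
  \sum_(bb.+1 <= i < k.+1) (N - i) <= \sum_(a < s) (g - a.+1).
Proof.
move=> bk ks Ng.
rewrite big_add1 -{1}(add0n bb) big_addn big_mkord.
rewrite -(big_mkord xpredT (fun a => g - a.+1)).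
rewrite (big_cat_nat (leq0n (k - bb)) ks) /= big_mkord.
apply: leq_trans (leq_addr _ _).
apply: leq_sum => i _.
rewrite -addSn addnC subnDA.
exact: leq_sub2r.
Qed.


Lemma idx_lt m e (y : 'I_m.+1) (l : 'I_e.+1) : y * e.+1 + l < m.+1 * e.+1.
Proof.
apply: (@leq_trans (y.+1 * e.+1)); first by rewrite mulSnr ltn_add2l.
by rewrite leq_mul2r ltn_ord orbT.
Qed.

Definition idx m e (y : 'I_m.+1) (l : 'I_e.+1) : 'I_(m.+1 * e.+1) := Ordinal (idx_lt y l).

Definition pack (F : Type) m e (f : 'I_m.+1 -> 'I_e.+1 -> F) : (m.+1 * e.+1).-tuple F :=
  [tuple f (inord (t %/ e.+1)) (inord (t %% e.+1)) | t < m.+1 * e.+1].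

Definition get (F : Type) m e (c : (m.+1 * e.+1).-tuple F) (y : 'I_m.+1) (l : 'I_e.+1) : F :=
  tnth c (idx y l).

Lemma get_pack (F : Type) m e (f : 'I_m.+1 -> 'I_e.+1 -> F) y l : get (pack f) y l = f y l.
Proof.
rewrite /get /pack tnth_mktuple /=.
rewrite divnMDl // modnMDl divn_small ?modn_small ?addn0 ?ltn_ord //.
by congr f; apply: val_inj; rewrite /= inordK.
Qed.

Definition rel m (j i : 'I_m.+2) : 'I_m.+1 := odflt ord0 (unlift j i).

Lemma lift_rel m (j i : 'I_m.+2) : i != j -> lift j (rel j i) = i.
Proof.
move=> ij; rewrite /rel; case: unliftP => [y ->|e] //.
by move: ij; rewrite e eqxx.
Qed.

Definition code (F : finFieldType) m e B (pt : {set 'I_m.+2} * 'I_e.+1 -> F)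
  (f : B.-tuple F) (A : {set 'I_m.+2}) (l : 'I_e.+1) : F := (Poly (f : seq F)).[pt (A, l)]%R.

Definition consist (F : finFieldType) m e B (pt : {set 'I_m.+2} * 'I_e.+1 -> F)
  (S T : {set 'I_m.+2}) (x : 'I_m.+2 -> (m.+1 * e.+1).-tuple F) (f' : B.-tuple F) : bool :=
  [forall xx : 'I_m.+2, forall y : 'I_m.+1, forall l : 'I_e.+1,
    ((xx \in S) && (xx \notin T) && (lift xx y \notin T)) ==>
    (get (x xx) y l == code pt f' [set xx; lift xx y] l)].

Definition schA (F : finFieldType) m e B (b : nat) (pt : {set 'I_m.+2} * 'I_e.+1 -> F)
  : scheme F m.+2 (m.+1 * e.+1) e.+1 B :=
  @Scheme F m.+2 (m.+1 * e.+1) e.+1 B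
    (fun (x : 'I_m.+2) (f : B.-tuple F) => pack (fun (y : 'I_m.+1) l => code pt f [set x; lift x y] l))
    (fun (h : seq 'I_m.+2) (j : 'I_m.+2) c => [tuple get c (rel j (last ord0 h)) l | l < e.+1])
    (fun (h : seq 'I_m.+2) ms => pack (fun (y : 'I_m.+1) l => tnth (ms (lift (last ord0 h) y)) l))
    (fun (h : seq 'I_m.+2) (S : {set 'I_m.+2}) x => odflt (ztup F B)
        [pick f' | [exists T : {set 'I_m.+2}, (#|T| <= b) && consist pt S T x f']]).

Definition Wset m (A : seq (nat * nat)) : {set 'I_m.+2} := [set x : 'I_m.+2 | (x : nat) \in map fst A].

Definition InvA (F : finFieldType) m e B (pt : {set 'I_m.+2} * 'I_e.+1 -> F) (f : B.-tuple F)
  (W : {set 'I_m.+2}) (st : 'I_m.+2 -> (m.+1 * e.+1).-tuple F) :=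
  forall x y l, x \notin W -> lift x y \notin W -> get (st x) y l = code pt f [set x; lift x y] l.

Lemma run_invA (F : finFieldType) m e B b (pt : {set 'I_m.+2} * 'I_e.+1 -> F) (f : B.-tuple F) A adv :
  forall rest h st gn t, InvA pt f (Wset m A) st ->
  InvA pt f (Wset m A) (run (schA B b pt) A adv h st gn t rest).1.
Proof.
elim=> [|i rest IH] h st gn t Hi //=.
apply: IH => x y l xW yW.
case: (eqVneq x i) => [exi|xi]; last by apply: Hi.
subst x.
rewrite get_pack last_rcons.
set j := lift i y.
have ji : j != i by rewrite eq_sym neq_lift.
rewrite (negbTE ji).
have -> : ((j : nat), gn j) \in A = false.
  apply/negP => jA; move: yW; rewrite inE.
  by rewrite (map_f fst jA).
rewrite tnth_mktuple Hi //; last by rewrite lift_rel // eq_sym.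
have ij : i != j by rewrite eq_sym.
rewrite lift_rel // /code. do 3 f_equal. apply/setP => z. rewrite !inE orbC. reflexivity.
Qed.

Lemma Poly_inj (F : finFieldType) B (f f' : B.-tuple F) : Poly (f : seq F) = Poly (f' : seq F) -> f = f'.
Proof.
move=> e; apply: val_inj; apply: (@eq_from_nth _ 0%R); first by rewrite !size_tuple.
by move=> i _; have := congr1 (fun p : {poly F} => p`_i)%R e; rewrite !coef_Poly.
Qed.

Lemma consist_agree (F : finFieldType) m e B (pt : {set 'I_m.+2} * 'I_e.+1 -> F) S W x (f : B.-tuple F)
  u v l : consist pt S W x f -> u \in S -> u \notin W -> v \notin W -> v != u ->
  get (x u) (rel u v) l = code pt f [set u; v] l.
Proof.
move=> /forallP /(_ u) /forallP /(_ (rel u v)) /forallP /(_ l) H uS uW vW vu.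
rewrite lift_rel // in H.
by apply/eqP; apply: (implyP H); rewrite uS uW vW.
Qed.


Lemma uniq_dec (F : finFieldType) m e B b k (pt : {set 'I_m.+2} * 'I_e.+1 -> F) :
  injective pt ->
  B = (\sum_(2 * b + 1 <= i < k.+1) (m.+2 - i) * e.+1)%N ->
  2 * b < k ->
  forall (S W T : {set 'I_m.+2}) x (f f' : B.-tuple F), #|S| = k -> #|W| <= b -> #|T| <= b ->
  consist pt S W x f -> consist pt S T x f' -> f = f'.
Proof.
move=> ptinj EB bk S W T x f f' cS cW cT Hf Hf'.
pose V := W :|: T.
have cV : #|V| <= 2 * b.
  rewrite cardsU mul2n -addnn; apply: leq_trans (leq_subr _ _) _.
  exact: leq_add.
have agree : forall u v l, u \in S :\: V -> v \in ~: V :\ u ->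
    code pt f [set u; v] l = code pt f' [set u; v] l.
  move=> u v l; rewrite !inE !negb_or => /andP[/andP[uW uT] uS] /andP[vu /andP[vW vT]].
  rewrite -(consist_agree l Hf) // -(consist_agree l Hf') //.
pose E := Eset (S :\: V) (~: V).
have sUG : S :\: V \subset ~: V by apply/subsetP => z; rewrite !inE => /andP[].
have cE := card_Eset (erefl #|S :\: V|) sUG.
have cSV : k - 2 * b <= #|S :\: V|.
  rewrite cardsD cS; apply: leq_sub2l; apply: leq_trans cV.
  by apply: subset_leq_card; apply: subsetIr.
have cG : m.+2 - 2 * b <= #|~: V|.
  have h : #|V| + #|~: V| = m.+2 by rewrite cardsC card_ord.
  apply: (@leq_trans (m.+2 - #|V|)); first by rewrite leq_sub2l.
  by rewrite -{1}h addKn.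
have hsum := sum_mono (ltnW bk) cSV cG.
rewrite -addn1 in hsum.
have BE : B <= #|E| * e.+1.
  rewrite EB -big_distrl /= leq_mul2r; apply/orP; right.
  exact: leq_trans hsum cE.
apply: Poly_inj; apply/eqP; rewrite -subr_eq0; apply/negPn/negP => p0.
pose rs := [seq pt q | q <- enum (setX E [set: 'I_e.+1])].
have Hall : all (root (Poly (f : seq F) - Poly (f' : seq F))) rs.
  apply/allP => z /mapP[[A l] qE ->]; move: qE; rewrite mem_enum inE /= => /andP[AE _].
  rewrite /root hornerD hornerN subr_eq0.
  case/imset2P: AE => u v uU vG ->.
  by have := agree u v l uU vG; rewrite /code => ->.
have Hu : uniq rs by rewrite map_inj_uniq // enum_uniq.
have := max_poly_roots p0 Hall Hu.
rewrite size_map -cardE cardsX cardsT card_ord.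
have sp : size (Poly (f : seq F) - Poly (f' : seq F))%R <= B.
  apply: (leq_trans (size_polyD _ _)); rewrite size_polyN geq_max.
  by rewrite !(leq_trans (size_Poly _)) ?size_tuple.
move=> lt; have := leq_trans lt sp; rewrite ltnNge.
by rewrite BE.
Qed.

Lemma card_Wset m (A : seq (nat * nat)) : #|Wset m A| <= size A.
Proof.
apply: (@leq_trans #|pmap insub (map fst A) : seq 'I_m.+2|).
  apply: subset_leq_card; apply/subsetP => z; rewrite inE.
  by rewrite mem_pmap_sub.
apply: leq_trans (card_size _) _.
by rewrite size_pmap (leq_trans (count_size _ _)) ?size_map.
Qed.

Lemma achieve (F : finFieldType) m e b k (pt : {set 'I_m.+2} * 'I_e.+1 -> F) :
  injective pt -> 2 * b < k ->
  resilient F m.+2 k b (m.+1 * e.+1) e.+1 (\sum_(2 * b + 1 <= i < k.+1) (m.+2 - i) * e.+1).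
Proof.
move=> ptinj bk.
set B := (\sum_(2 * b + 1 <= i < k.+1) (m.+2 - i) * e.+1).
exists (schA B b pt) => file fs A advmsg advdc S sA cS.
have Hi0 : InvA pt file (Wset m A) (fun j => enc (schA B b pt) j file).
  by move=> x y l _ _; rewrite /= get_pack.
have Hinv := @run_invA F m e B b pt file A advmsg fs [::] _ (fun _ => 0) 0 Hi0.
have Hc : consist pt S (Wset m A) (download (schA B b pt) file fs A advmsg advdc S) file.
  apply/forallP => xx; apply/forallP => y; apply/forallP => l.
  apply/implyP => /andP[/andP[xS xW] yW].
  rewrite /download xS.
  set r := run _ _ _ _ _ _ _ _.
  have -> : ((xx : nat), r.2 xx) \in A = false.
    apply/negP => jA; move: xW; rewrite inE.
    by rewrite (map_f fst jA).
  by apply/eqP; apply: Hinv.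
have cW : #|Wset m A| <= b by apply: leq_trans (card_Wset _ _) sA.
rewrite /= ; case: pickP => [f' /existsP[T /andP[cT Hc']]|none] /=.
  symmetry; exact: (uniq_dec ptinj erefl bk cS cW cT Hc Hc').
have := none file. suff -> : [exists T : {set 'I_m.+2}, (#|T| <= b) && consist pt S T (download (schA B b pt) file fs A advmsg advdc S) file] by []. by apply/existsP; exists (Wset m A); rewrite cW Hc.
Qed.


Lemma pt_inj (F : finFieldType) (T : finType) : #|T| <= #|F| ->
  injective (fun q : T => nth 0%R (enum F) (enum_rank q)).
Proof.
move=> TF q1 q2 /= e; apply: enum_rank_inj; apply: val_inj.
have h1 : enum_rank q1 < size (enum F) by rewrite -cardE (leq_trans (ltn_ord _)) // -cardT.
have h2 : enum_rank q2 < size (enum F) by rewrite -cardE (leq_trans (ltn_ord _)) // -cardT.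
by apply/eqP; rewrite -(nth_uniq 0%R h1 h2 (enum_uniq _)) e.
Qed.

Theorem theorem4 (n k b beta : nat) :
  (0 < k)%N -> (k <= n.-1)%N -> (0 < beta)%N ->
  ((2 * b < k)%N ->
     exists Q : nat, forall F : finFieldType, (Q <= #|F|)%N ->
       resilient F n k b (n.-1 * beta) beta
                 (\sum_(2 * b + 1 <= i < k.+1) (n - i) * beta)%N /\
       (forall al beta' B : nat, (beta' <= beta)%N ->
          resilient F n k b al beta' B ->
          (B <= \sum_(2 * b + 1 <= i < k.+1) (n - i) * beta)%N)) /\
  ((k <= 2 * b)%N ->
     forall F : finFieldType, forall al beta' B : nat, (beta' <= beta)%N ->
       resilient F n k b al beta' B -> B = 0%N).
Proof.
case: n => [|[|m]] k0 kn; first by move: (leq_trans k0 kn).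
  by move: (leq_trans k0 kn).
case: beta => [//|e] _.
split.
  move=> bk; exists #|{: {set 'I_m.+2} * 'I_e.+1}| => F QF; split.
    have := @achieve F m e b k _ (@pt_inj F _ QF) bk. exact.
  move=> al beta' B bb [sch Hres].
  have bb2 : b + b <= k by rewrite addnn -mul2n ltnW.
  have := conv_bound kn (leqnn b) (leqnn b) bb2 Hres.
  rewrite card_Dset // => h; apply: (leq_trans h).
  rewrite -big_distrl /= mulnC addnn -mul2n addn1.
  by apply: leq_mul.
move=> kb F al beta' B bb [sch Hres].
have c1b : minn b k <= b by apply: geq_minl.
have c1k : minn b k <= k by apply: geq_minr.
have c2b : k - minn b k <= b.
  case: (leqP b k) => bk; last by rewrite subnn.
  by rewrite leq_subLR addnn -mul2n.
have ck : minn b k + (k - minn b k) <= k by rewrite subnKC.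
have := conv_bound kn c1b c2b ck Hres.
rewrite subnKC // card_Dset // big_geq // muln0.
by rewrite leqn0 => /eqP.
Qed.
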